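(* Let $X$ be a real or complex separable infinite-dimensional F-space and $T:X\to X$ a continuous linear operator. If $T$ is recurrent and cyclic, then the set of cyclic vectors of $T$ is a dense $G_\delta$ subset of $X$. In particular, if $T$ is recurrent and cyclic, then $T$ is quasi-rigid.
   Context: An F-space is a completely metrizable topological vector space. $T$ is recurrent if the set of $x$ with $x\in\overline{\{T^nx:n\geq1\}}$ is dense in $X$. A vector $x$ is cyclic if $\mathrm{span}\{T^nx:n\geq0\}$ is dense in $X$; $T$ is cyclic if it has a cyclic vector. $T$ is quasi-rigid if there exist a strictly increasing sequence $(n_k)$ of positive integers and a dense $Y\subset X$ with $T^{n_k}x\to x$ for every $x\in Y$. *)

(* Defs.v *)
From mathcomp Require Import all_boot all_algebra.
From mathcomp Require Import all_classical all_reals all_analysis.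
From mathcomp Require Export complex.
From mathcomp Require Import borel_hierarchy.

Set Implicit Arguments.
Unset Strict Implicit.
Unset Printing Implicit Defensive.

Import GRing.Theory Num.Theory.
Local Open Scope classical_set_scope.
Local Open Scope ring_scope.

(* The topological vector space structure (continuity of +, -, and of the *)
(* scalar multiplication K x X -> X) is given by topologicalLmodType K.    *)

Definition is_metric (R : realType) (X : Type) (d : X -> X -> R) : Prop :=
  [/\ forall x y, 0 <= d x y,
      forall x y, d x y = 0 <-> x = y,
      forall x y, d x y = d y x &
      forall x y z, d x z <= d x y + d y z].

Definition metric_induces_topology (R : realType) (X : topologicalType)
    (d : X -> X -> R) : Prop :=
  forall (x : X) (U : set X),
    nbhs x U <-> exists2 e : R, 0 < e & [set y | d x y < e] `<=` U.

Definition metric_complete (R : realType) (X : topologicalType)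
    (d : X -> X -> R) : Prop :=
  forall u : nat -> X,
    (forall e : R, 0 < e -> exists N : nat,
        forall m n : nat, (N <= m)%N -> (N <= n)%N -> d (u m) (u n) < e) ->
    exists l : X, u @ \oo --> l.

Definition completely_metrizable (R : realType) (X : topologicalType) : Prop :=
  exists d : X -> X -> R,
    [/\ is_metric d, metric_induces_topology d & metric_complete d].

Definition F_space (R : realType) (K : numFieldType)
    (X : topologicalLmodType K) : Prop :=
  completely_metrizable R X.

Definition separable (X : topologicalType) : Prop :=
  exists D : set X, countable D /\ dense D.

Definition infinite_dimensional (K : numFieldType) (X : lmodType K) : Prop :=
  forall n : nat, exists v : 'I_n -> X,
    forall c : 'I_n -> K, \sum_(i < n) c i *: v i = 0 -> forall i, c i = 0.

Definition recurrent_vector (X : topologicalType) (T : X -> X) (x : X) : Prop :=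
  closure [set iter n T x | n in [set n : nat | (1 <= n)%N]] x.

Definition recurrent (X : topologicalType) (T : X -> X) : Prop :=
  dense [set x | recurrent_vector T x].

Definition orbit_span (K : numFieldType) (X : lmodType K) (T : X -> X) (x : X)
    : set X :=
  [set y | exists (N : nat) (c : nat -> K), y = \sum_(i < N) c i *: iter i T x].

Definition cyclic_vector (K : numFieldType) (X : topologicalLmodType K)
    (T : X -> X) (x : X) : Prop :=
  dense (orbit_span T x).

Definition cyclic_operator (K : numFieldType) (X : topologicalLmodType K)
    (T : X -> X) : Prop :=
  exists x : X, cyclic_vector T x.

Definition quasi_rigid (X : topologicalType) (T : X -> X) : Prop :=
  exists nk : nat -> nat,
    [/\ (1 <= nk 0)%N, (forall k, (nk k < nk k.+1)%N) &
        exists Y : set X, dense Y /\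
          forall x, Y x -> (fun k => iter (nk k) T x) @ \oo --> x].

Definition thm7_for (R : realType) (K : numFieldType) : Prop :=
  forall (X : topologicalLmodType K) (T : {linear X -> X}),
    F_space R X -> separable X -> infinite_dimensional X ->
    continuous T ->
    recurrent T -> cyclic_operator T ->
    (dense [set x | cyclic_vector T x] /\ Gdelta [set x | cyclic_vector T x])
    /\ quasi_rigid T.

(* Main.v *)
Require Import Defs.
From mathcomp Require Import all_boot all_order all_algebra all_field.
From mathcomp Require Import all_classical all_reals all_analysis.
From mathcomp Require Import complex borel_hierarchy.
From mathcomp Require Import ring lra zify.
Set Implicit Arguments. Unset Strict Implicit. Unset Printing Implicit Defensive.
Import Order.TTheory GRing.Theory Num.Theory numFieldNormedType.Exports.
Local Open Scope classical_set_scope.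
Local Open Scope ring_scope.

Section Metric.
Variables (R : realType) (X : topologicalType) (d : X -> X -> R).
Hypotheses (dm : is_metric d) (dt : metric_induces_topology d).

Lemma d_ge0 x y : 0 <= d x y. Proof. by case: dm. Qed.
Lemma d_sym x y : d x y = d y x. Proof. by case: dm. Qed.
Lemma d_tri x y z : d x z <= d x y + d y z. Proof. by case: dm. Qed.
Lemma d_xx x : d x x = 0. Proof. by case: dm => _ h _ _; apply: (proj2 (h x x)). Qed.
Lemma d_eq0 x y : d x y = 0 -> x = y. Proof. by case: dm => _ h _ _; apply: (proj1 (h x y)). Qed.

Lemma ball_nbhs x e : 0 < e -> nbhs x [set y | d x y < e].
Proof. by move=> e0; apply/dt; exists e. Qed.

Lemma open_ball x e : open [set y | d x y < e].
Proof.
rewrite openE => y /= dxy; apply/dt; exists (e - d x y); first by rewrite subr_gt0.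
move=> z /= dyz; have := d_tri x y z; lra.
Qed.

Lemma closureP S x : closure S x <-> forall e, 0 < e -> exists y, S y /\ d x y < e.
Proof.
split.
  by move=> H e e0; have [y [Sy By]] := H _ (ball_nbhs x e0); exists y.
move=> H B /dt [e e0 sub]; have [y [Sy dy]] := H e e0.
by exists y; split => //; apply: sub.
Qed.

Lemma denseP S : dense S <-> forall x e, 0 < e -> exists y, S y /\ d x y < e.
Proof.
split.
  move=> H x e e0.
  have [y [By Sy]] := H [set y | d x y < e] (ex_intro _ x (eq_ind_r (fun t => t < e) e0 (d_xx x))) (open_ball x e).
  by exists y.
move=> H O [x Ox] oO; move: oO; rewrite openE => /(_ x Ox) /dt [e e0 sub].
have [y [Sy dy]] := H x e e0; by exists y; split => //; apply: sub.
Qed.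

Lemma cvgP (u : nat -> X) l : u @ \oo --> l <->
  forall e, 0 < e -> exists N, forall n, (N <= n)%N -> d l (u n) < e.
Proof.
split.
  move=> H e e0; have := H _ (ball_nbhs l e0).
  by move=> [N _ HN]; exists N => n Nn; apply: HN.
move=> H B /dt [e e0 sub]; have [N HN] := H e e0.
by exists N => // n /= Nn; apply: sub; apply: HN.
Qed.

Lemma contP (f : X -> X) x : {for x, continuous f} ->
  forall e, 0 < e -> exists2 del, 0 < del & forall y, d x y < del -> d (f x) (f y) < e.
Proof.
move=> H e e0; have := H _ (ball_nbhs (f x) e0).
by move=> /dt [del del0 sub]; exists del => // y /sub.
Qed.

End Metric.
Section TopLmod.
Variables (K : numFieldType) (X : topologicalLmodType K).

Lemma contD (Y : topologicalType) (f g : Y -> X) : continuous f -> continuous g ->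
  continuous (fun x => f x + g x).
Proof.
move=> cf cg x.
apply: (@continuous_comp _ _ _ (fun x => (f x, g x)) (fun z : X * X => z.1 + z.2)).
  by apply: cvg_pair; [exact: cf|exact: cg].
exact: add_continuous.
Qed.

Lemma contZ (Y : topologicalType) (c : K) (f : Y -> X) : continuous f ->
  continuous (fun x => c *: f x).
Proof.
move=> cf x.
apply: (@continuous_comp _ _ _ (fun x => ((c : K^o), f x)) (fun z : K^o * X => z.1 *: z.2)).
  by apply: (@cvg_pair _ _ _ _ (nbhs (c : K^o))); [exact: cvg_cst|exact: cf].
exact: scale_continuous.
Qed.

Lemma cont0 (Y : topologicalType) : continuous (fun _ : Y => (0 : X)).
Proof. by move=> x; exact: cvg_cst. Qed.

Lemma cont_sum (Y : topologicalType) n (F : nat -> Y -> X) :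
  (forall i, continuous (F i)) -> continuous (fun x => \sum_(i < n) F i x).
Proof.
move=> cF; elim: n => [|n IH].
  by under eq_fun do rewrite big_ord0; exact: cont0.
under eq_fun do rewrite big_ord_recr /=.
exact: contD.
Qed.

Lemma cvgD_seq (u v : nat -> X) a b : u @ \oo --> a -> v @ \oo --> b ->
  (fun n => u n + v n) @ \oo --> a + b.
Proof.
move=> cu cv.
exact: (@continuous_cvg _ _ _ _ _ (fun n => (u n, v n)) (fun z : X * X => z.1 + z.2) (a, b) (@add_continuous _ (a, b)) (cvg_pair cu cv)).
Qed.

Lemma cvgZ_seq (s : nat -> K) (v : nat -> X) (k : K) b :
  s @ \oo --> k -> v @ \oo --> b ->
  (fun n => s n *: v n) @ \oo --> k *: b.
Proof.
move=> cs cv.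
exact: (@continuous_cvg _ _ _ _ _ (fun n => ((s n : K^o), v n)) (fun z : K^o * X => z.1 *: z.2) ((k : K^o), b) (@scale_continuous _ _ ((k : K^o), b)) (cvg_pair cs cv)).
Qed.

End TopLmod.
Section Pop.
Variables (K : numFieldType) (X : lmodType K) (T : {linear X -> X}).

Implicit Types (p q : {poly K}) (u v w : X) (c : K).

Definition Pop (p : {poly K}) (v : X) : X := \sum_(i < size p) p`_i *: iter i T v.

Lemma PopE n p v : (size p <= n)%N -> Pop p v = \sum_(i < n) p`_i *: iter i T v.
Proof.
move=> H; rewrite /Pop (big_ord_widen n (fun i => p`_i *: iter i T v) H).
rewrite big_mkcond; apply: eq_bigr => i _; case: ifP => // /negbT.
by rewrite -leqNgt => /(nth_default 0) ->; rewrite scale0r.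
Qed.

Lemma Pop0 v : Pop 0 v = 0.
Proof. by rewrite /Pop size_poly0 big_ord0. Qed.

Lemma PopD p q v : Pop (p + q) v = Pop p v + Pop q v.
Proof.
have Hp := leq_maxl (size p) (size q); have Hq := leq_maxr (size p) (size q).
rewrite (PopE _ (size_add p q)) (PopE _ Hp) (PopE _ Hq) -big_split.
by apply: eq_bigr => i _; rewrite coefD scalerDl.
Qed.

Lemma PopZ c p v : Pop (c *: p) v = c *: Pop p v.
Proof.
rewrite (PopE _ (size_scale_leq c p)) /Pop scaler_sumr.
by apply: eq_bigr => i _; rewrite coefZ scalerA.
Qed.

Lemma PopC c v : Pop c%:P v = c *: v.
Proof. by rewrite (PopE _ (size_polyC_leq1 c)) big_ord1 coefC /=. Qed.

Lemma PopXM p v : Pop ('X * p)%R v = T (Pop p v).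
Proof.
have H : (size ('X * p)%R <= (size p).+1)%N.
  apply: (leq_trans (size_mul_leq _ _)); by rewrite size_polyX.
rewrite (PopE _ H) big_ord_recl coefXM /= scale0r add0r /Pop linear_sum.
apply: eq_bigr => i _; rewrite coefXM /= linearZ /=; congr (_ *: _).
Qed.


Lemma iterlD i u w : iter i T (u + w) = iter i T u + iter i T w.
Proof. by elim: i => //= i ->; rewrite linearD. Qed.

Lemma iterlZ i c u : iter i T (c *: u) = c *: iter i T u.
Proof. by elim: i => //= i ->; rewrite linearZ. Qed.

Lemma PopvD p u w : Pop p (u + w) = Pop p u + Pop p w.
Proof.
rewrite /Pop -big_split; apply: eq_bigr => i _.
by rewrite iterlD scalerDr.
Qed.

Lemma PopvZ p c u : Pop p (c *: u) = c *: Pop p u.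
Proof.
rewrite /Pop scaler_sumr; apply: eq_bigr => i _.
by rewrite iterlZ !scalerA mulrC.
Qed.

Lemma Popv0 p : Pop p 0 = 0.
Proof. by have := PopvZ p 0 0; rewrite !scale0r. Qed.

Lemma PopM p q v : Pop (p * q) v = Pop p (Pop q v).
Proof.
move: p; apply: poly_ind => [|p c IH]; first by rewrite mul0r !Pop0.
rewrite mulrDl -mulrA (mulrC 'X) mulrA mul_polyC -(mulrC 'X) PopD PopZ PopXM IH.
by rewrite PopD (mulrC p) PopXM PopC.
Qed.

Lemma PopX v : Pop 'X v = T v.
Proof. by rewrite -(mulr1 'X) PopXM PopC scale1r. Qed.

Lemma Pop_T p v : Pop p (T v) = T (Pop p v).
Proof. by rewrite -PopX -PopM mulrC PopM PopX. Qed.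

Lemma Pop_iter p n v : Pop p (iter n T v) = iter n T (Pop p v).
Proof. by elim: n => //= n <-; rewrite Pop_T. Qed.

Lemma Pop_Xn n v : Pop ('X^n) v = iter n T v.
Proof.
elim: n => [|n IH]; first by rewrite expr0 PopC scale1r.
by rewrite exprS PopXM IH.
Qed.

Lemma orbit_spanE x : orbit_span T x = [set Pop p x | p in setT].
Proof.
apply/seteqP; split => y /=.
  move=> [N [c ->]]; exists (\poly_(i < N) c i) => //.
  rewrite (PopE _ (size_poly _ _)); apply: eq_bigr => i _.
  by rewrite coef_poly ltn_ord.
move=> [p _ <-]; exists (size p), (fun i => p`_i) => //.
Qed.

End Pop.
Section Dyn.
Variables (R : realType) (K : numFieldType) (X : topologicalLmodType K).
Variables (T : {linear X -> X}) (d : X -> X -> R).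
Hypotheses (dm : is_metric d) (dt : metric_induces_topology d).
Hypothesis Tc : continuous T.

Lemma iter_cont n : continuous (iter n T).
Proof.
elim: n => [|n IH] /=; first by move=> x; exact: cvg_id.
move=> x; apply: (@continuous_comp _ _ _ (iter n T) T x (IH x)); exact: Tc.
Qed.

Lemma Pop_cont p : continuous (Pop T p).
Proof.
rewrite /Pop; apply: (@cont_sum _ _ _ _ (fun i x => p`_i *: iter i T x)) => i.
by apply: contZ; exact: iter_cont.
Qed.

Lemma rec_far y : recurrent_vector T y -> forall N e, 0 < e ->
  exists n, (N < n)%N /\ d y (iter n T y) < e.
Proof.
move=> /(closureP dt) Hy; elim=> [|N IH] e e0.
  by have [_ [[n n1 <-] dn]] := Hy e e0; exists n.
have [Hp|Hp] := pselect (iter N.+1 T y = y).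
  exists (N.+1 + N.+1)%N; split; first by lia.
  by rewrite iterD Hp Hp (d_xx dm).
have e1 : 0 < d y (iter N.+1 T y).
  rewrite lt_neqAle (d_ge0 dm) andbT eq_sym; apply/negP => /eqP /(d_eq0 dm) h; apply: Hp; by rewrite -h.
have m0 : 0 < Num.min e (d y (iter N.+1 T y)) by rewrite lt_min e0 e1.
have [n [Nn dn]] := IH _ m0.
exists n; split; last by move: dn; rewrite lt_min => /andP[].
rewrite ltn_neqAle Nn andbT; apply/eqP => En; move: dn; rewrite -En lt_min ltxx.
by rewrite andbF.
Qed.


Lemma open_nbhs_in (U : set X) x : open U -> U x -> nbhs x U.
Proof. by rewrite openE => /(_ x). Qed.

Lemma Oam_open a m : open [set x | exists p, d a (Pop T p x) < m.+1%:R^-1].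
Proof.
rewrite openE => x [p dp].
have h := @Pop_cont p x _ (open_nbhs_in (open_ball dm dt a m.+1%:R^-1) dp).
apply: (@filterS _ (nbhs x) _ (Pop T p @^-1` [set y | d a y < m.+1%:R^-1])) => //.
by move=> y /= hy; exists p.
Qed.

Lemma inv_small (e : R) : 0 < e -> exists m : nat, m.+1%:R^-1 < e.
Proof.
move=> e0; have [m hm] := ltr_add_invr e0; exists m.
by rewrite add0r in hm.
Qed.

Lemma cyc_char (D : set X) x : dense D ->
  cyclic_vector T x <-> forall a m, D a -> exists p, d a (Pop T p x) < m.+1%:R^-1.
Proof.
move=> dD; rewrite /cyclic_vector orbit_spanE (denseP dm dt); split.
  move=> H a m Da; have [_ [[p _ <-] dp]] := H a m.+1%:R^-1 ltac:(by rewrite invr_gt0 ltr0Sn).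
  by exists p.
move=> H z e e0; have e2 : 0 < e / 2 by rewrite divr_gt0.
have [a [Da da]] := (proj1 (denseP dm dt D) dD) z _ e2.
have [m hm] := inv_small e2; have [p dp] := H a m Da.
exists (Pop T p x); split; first by exists p.
have := d_tri dm z a (Pop T p x); move: (m.+1%:R^-1 : R) hm dp => r hm dp; lra.
Qed.


Lemma cyc_Gdelta : Defs.separable X -> Gdelta [set x | cyclic_vector T x].
Proof.
case=> D [/countable_injP [f finj] dD].
pose O n m := [set x | forall a, D a -> f a = n ->
  exists p, d a (Pop T p x) < m.+1%:R^-1].
have oO n m : open (O n m).
  have [[a [Da fa]]|N] := pselect (exists a, D a /\ f a = n).
    have -> : O n m = [set x | exists p, d a (Pop T p x) < m.+1%:R^-1].
      apply/seteqP; split => x /=; first by move=> H; apply: H.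
      move=> H a' Da' fa'; have -> // : a' = a.
      by apply: finj; rewrite ?inE //; rewrite fa fa'.
    exact: Oam_open.
  have -> : O n m = setT.
    apply/seteqP; split => x //= _ a Da fa; exfalso; apply: N; by exists a.
  exact: openT.
pose F k := match @unpickle (nat * nat)%type k with
  | Some nm => O nm.1 nm.2 | None => setT end.
exists F.
  by move=> k; rewrite /F; case: (unpickle k) => [[n m]|] //; exact: openT.
apply/seteqP; split => x /=.
  move=> /(cyc_char x dD) H k _; rewrite /F; case: (unpickle k) => [[n m]|] //=.
  by move=> a Da _; apply: H.
move=> H; apply/(cyc_char x dD) => a m Da.
have := H (pickle (f a, m)) I; rewrite /F pickleK /=.
by move=> /(_ a Da erefl).
Qed.


Lemma inv_mono (n m : nat) : (n <= m)%N -> (m.+1%:R^-1 : R) <= n.+1%:R^-1.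
Proof. by move=> nm; rewrite lef_pV2 ?posrE ?ltr0Sn // ler_nat. Qed.

Lemma inv_pos (n : nat) : (0 : R) < n.+1%:R^-1.
Proof. by rewrite invr_gt0 ltr0Sn. Qed.

Lemma cyclic_Pop x p : cyclic_vector T x -> dense (range (Pop T p)) ->
  cyclic_vector T (Pop T p x).
Proof.
rewrite /cyclic_vector !orbit_spanE !(denseP dm dt) => Hx Hp z e e0.
have e2 : 0 < e / 2 by rewrite divr_gt0.
have [_ [[w _ <-] dw]] := Hp z _ e2.
have [del del0 Hdel] := contP dt (@Pop_cont p w) e2.
have [_ [[q _ <-] dq]] := Hx w del del0.
exists (Pop T p (Pop T q x)); split.
  by exists q => //; rewrite -!PopM mulrC.
have := Hdel _ dq; have := d_tri dm z (Pop T p w) (Pop T p (Pop T q x)); lra.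
Qed.

Lemma dense_sup (A B : set X) : A `<=` B -> dense A -> dense B.
Proof.
move=> AB; rewrite !(denseP dm dt) => H x e e0.
have [y [Ay dy]] := H x e e0; by exists y; split => //; apply: AB.
Qed.

Hypothesis dc : metric_complete d.

Lemma baire (G : nat -> set X) : (forall k, open (G k)) ->
  (forall k, dense (G k)) -> exists x, forall k, G k x.
Proof.
move=> oG dG.
have step : forall t : nat * X * R, exists cr : X * R, 0 < t.2 ->
   [/\ 0 < cr.2, cr.2 <= t.1.1.+1%:R^-1 &
     forall y, d cr.1 y < 2 * cr.2 -> G t.1.1 y /\ d t.1.2 y < t.2 / 2].
  move=> [[k c] r] /=.
  have [r0|] := pselect (0 < r); last by move=> H; exists (c, r).
  have r2 : 0 < r / 2 by rewrite divr_gt0.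
  have [y [Gy dy]] := proj1 (denseP dm dt (G k)) (dG k) c _ r2.
  have oU : open (G k `&` [set z | d c z < r / 2]).
    by apply: openI => //; exact: open_ball.
  have [e e0 sub] := proj1 (dt y _) (open_nbhs_in oU (conj Gy dy)).
  exists (y, Num.min (e / 2) k.+1%:R^-1) => _ /=; split.
  - by rewrite lt_min divr_gt0 //= inv_pos.
  - by rewrite ge_min lexx orbT.
  - move=> z dz; apply: sub => /=.
    have : Num.min (e / 2) k.+1%:R^-1 <= e / 2 by rewrite ge_min lexx.
    lra.
have [f Hf] := choice step.
pose s := fix s k := if k is k'.+1 then f (k', (s k').1, (s k').2) else ((0 : X), (1 : R)).
have spos k : 0 < (s k).2.
  by elim: k => [|k IH] /=; [exact: ltr01|case: (Hf (k, (s k).1, (s k).2) IH)].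
have Hs k : [/\ 0 < (s k.+1).2, (s k.+1).2 <= k.+1%:R^-1 &
     forall y, d (s k.+1).1 y < 2 * (s k.+1).2 -> G k y /\ d (s k).1 y < (s k).2 / 2].
  exact: (Hf (k, (s k).1, (s k).2) (spos k)).
have nest k m y : d (s (k + m)%N).1 y < (s (k + m)%N).2 -> d (s k).1 y < (s k).2.
  elim: m y => [|m IH] y; first by rewrite addn0.
  rewrite addnS => h; apply: IH.
  have [p1 _ H3] := Hs (k + m)%N.
  have h2 : d (s (k + m).+1).1 y < 2 * (s (k + m).+1).2 by lra.
  have [_ h3] := H3 y h2; have := spos (k + m)%N; lra.
have nestc k n : (k <= n)%N -> d (s k).1 (s n).1 < (s k).2.
  move=> kn; rewrite -(subnKC kn); apply: (nest k (n - k)%N); rewrite (d_xx dm); exact: spos.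
have [x cx] : exists x : X, (fun n => (s n).1) @ \oo --> x.
  have H := dc; move: H; rewrite /metric_complete => H; apply: H => e e0.
  have e2 : 0 < e / 2 by rewrite divr_gt0.
  have [N hN] := inv_small e2.
  exists N.+1 => m n hm hn.
  have [_ h1 _] := Hs N.
  have := nestc _ _ hm; have := nestc _ _ hn; rewrite (d_sym dm (s N.+1).1 (s m).1).
  have := d_tri dm (s m).1 (s N.+1).1 (s n).1.
  move: (N.+1%:R^-1 : R) hN h1 => r hN h1; lra.
exists x => k.
have [_ _ H3] := Hs k; apply: (proj1 (H3 x _)).
have [N hN] := proj1 (cvgP dt _ x) cx _ (spos k.+1).
have := hN (maxn N k.+1) (leq_maxl _ _).
have := nestc _ _ (leq_maxr N k.+1).
have := d_tri dm (s k.+1).1 (s (maxn N k.+1)).1 x.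
rewrite (d_sym dm x); lra.
Qed.


Lemma W_open m : open [set x | exists n, (0 < n)%N /\ d x (iter n T x) < m.+1%:R^-1].
Proof.
rewrite openE => x [n [n0 dn]].
have g0 : 0 < (m.+1%:R^-1 - d x (iter n T x)) / 2 by rewrite divr_gt0 // subr_gt0.
have [del del0 Hdel] := contP dt (@iter_cont n x) g0.
apply/dt; exists (Num.min del ((m.+1%:R^-1 - d x (iter n T x)) / 2)).
  by rewrite lt_min del0 g0.
move=> y /= dy; exists n; split => //.
move: dy; rewrite lt_min => /andP[d1 d2].
have := Hdel y d1.
have := d_tri dm y x (iter n T y); have := d_tri dm x (iter n T x) (iter n T y).
rewrite (d_sym dm y x).
move: (m.+1%:R^-1 : R) dn g0 d2 => r dn g0 d2; lra.
Qed.

Lemma generic_main : Defs.separable X -> recurrent T ->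
  dense [set x | cyclic_vector T x] ->
  (dense [set x | cyclic_vector T x] /\ Gdelta [set x | cyclic_vector T x])
  /\ quasi_rigid T.
Proof.
move=> sep rec dcyc; have gd := cyc_Gdelta sep; split => //.
case: (gd) => F oF eqF.
pose W m := [set x | exists n, (0 < n)%N /\ d x (iter n T x) < m.+1%:R^-1].
have dW m : dense (W m).
  apply: (dense_sup _ rec) => x /(closureP dt) /(_ _ (inv_pos m)).
  by move=> [_ [[n n0 <-] dn]]; exists n.
have dF k : dense (F k).
  apply: (dense_sup _ dcyc) => x cx; move: cx; rewrite eqF; by apply.
have [x Hx] := baire (fun k => openI (oF k) (W_open k))
  (fun k => denseI (oF k) (dF k) (dW k)).
have cx : cyclic_vector T x.
  have : [set x | cyclic_vector T x] x by rewrite eqF => k _; case: (Hx k).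
  by [].
have rx : recurrent_vector T x.
  apply/(closureP dt) => e e0; have [m hm] := inv_small e0.
  case: (Hx m) => _ [n [n0 dn]]; exists (iter n T x); split; first by exists n.
  move: (m.+1%:R^-1 : R) hm dn => r hm dn; lra.
have g0 : forall t : nat * nat, exists n, (t.1 < n)%N /\ d x (iter n T x) < t.2.+1%:R^-1.
  by move=> t; exact: rec_far rx t.1 _ (inv_pos t.2).
have [g Hg] := choice g0.
pose nk := fix nk k := if k is k'.+1 then g (nk k', k'.+1) else g (0, 0)%N.
have Hnk k : d x (iter (nk k) T x) < k.+1%:R^-1.
  by case: k => [|k]; [case: (Hg (0, 0)%N)|case: (Hg (nk k, k.+1))].
exists nk; split.
- by case: (Hg (0, 0)%N).
- by move=> k; case: (Hg (nk k, k.+1)).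
exists (orbit_span T x); split => // y; rewrite orbit_spanE => -[p _ <-].
have cv : (fun k => iter (nk k) T x) @ \oo --> x.
  apply/(cvgP dt) => e e0; have [N hN] := inv_small e0; exists N => k Nk.
  have := Hnk k; have := inv_mono Nk.
  move: (k.+1%:R^-1 : R) (N.+1%:R^-1 : R) hN => r1 r2 hN; lra.
have -> : (fun k => iter (nk k) T (Pop T p x)) = Pop T p \o (fun k => iter (nk k) T x).
  by apply: funext => k /=; rewrite Pop_iter.
exact: (continuous_cvg _ (@Pop_cont p x) cv).
Qed.

End Dyn.
Lemma sub_cvg (Y : topologicalType) (u : nat -> Y) (h : nat -> nat) (l : Y) :
  (forall k, (k < h k)%N) -> u @ \oo --> l -> (fun k => u (h k)) @ \oo --> l.
Proof.
move=> hk cu B /cu [N _ HN]; exists N => // k /= Nk; apply: HN => /=.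
exact: (leq_trans Nk (ltnW (hk k))).
Qed.

Section DR.
Variables (R : realType) (K : numFieldType) (X : topologicalLmodType K).
Variables (T : {linear X -> X}) (d : X -> X -> R).
Hypotheses (dm : is_metric d) (dt : metric_induces_topology d).
Hypothesis Tc : continuous T.
Hypothesis rec : recurrent T.

Definition DR (p : {poly K}) := dense (range (Pop T p)).

Lemma Pop_sum n (F : nat -> {poly K}) v :
  Pop T (\sum_(i < n) F i) v = \sum_(i < n) Pop T (F i) v.
Proof.
elim: n => [|n IH]; first by rewrite !big_ord0 Pop0.
by rewrite !big_ord_recr /= PopD IH.
Qed.

Lemma DR_mul p q : DR p -> DR q -> DR (p * q).
Proof.
rewrite /DR !(denseP dm dt) => Hp Hq z e e0.
have e2 : 0 < e / 2 by rewrite divr_gt0.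
have [_ [[w _ <-] dw]] := Hp z _ e2.
have [del del0 Hdel] := contP dt (@Pop_cont _ _ T Tc p w) e2.
have [_ [[u _ <-] du]] := Hq w del del0.
exists (Pop T (p * q) u); split; first by exists u.
rewrite PopM; have := Hdel _ du; have := d_tri dm z (Pop T p w) (Pop T p (Pop T q u)); lra.
Qed.

Lemma DR_scale c p : c != 0 -> DR p -> DR (c *: p).
Proof.
move=> c0; rewrite /DR; apply: (dense_sup dm dt) => _ [w _ <-].
exists (c^-1 *: w) => //; by rewrite PopZ PopvZ scalerA divff // scale1r.
Qed.

Lemma DR_const c : c != 0 -> DR c%:P.
Proof.
move=> c0; rewrite /DR (denseP dm dt) => z e e0; exists z; split; last by rewrite (d_xx dm).
exists (c^-1 *: z) => //; by rewrite PopC scalerA divff // scale1r.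
Qed.

Lemma key p (P : nat -> {poly K}) : (forall n, p %| P n) ->
  (forall y (h : nat -> nat), (forall k, (k < h k)%N) ->
     (fun k => iter (h k) T y) @ \oo --> y ->
     (fun k => Pop T (P (h k)) y) @ \oo --> y) -> DR p.
Proof.
move=> Hdiv Hcv; rewrite /DR (denseP dm dt) => z e e0.
have e2 : 0 < e / 2 by rewrite divr_gt0.
have [y [ry dy]] := proj1 (denseP dm dt _) rec z _ e2.
have g0 : forall N, exists n, (N < n)%N /\ d y (iter n T y) < N.+1%:R^-1.
  move=> N; have := @rec_far R K X T d dm dt y ry N _ (inv_pos R N). done.
have [h Hh] := choice g0.
have cv : (fun k => iter (h k) T y) @ \oo --> y.
  apply/(cvgP dt) => e' e'0; have [N hN] := inv_small e'0; exists N => k Nk.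
  have := proj2 (Hh k); have := inv_mono R Nk.
  move: (k.+1%:R^-1 : R) (N.+1%:R^-1 : R) hN => r1 r2 hN; lra.
have := Hcv y h (fun k => proj1 (Hh k)) cv.
move=> /(cvgP dt) /(_ _ e2) [N HN]; have := HN N (leqnn N).
have /dvdpP [q ->] := Hdiv (h N).
move=> dN; exists (Pop T (q * p) y); split.
  by exists (Pop T q y) => //; rewrite mulrC PopM.
have := d_tri dm z y (Pop T (q * p) y); lra.
Qed.

Lemma lin_small r : (fun n => r ^+ n) @ \oo --> (0 : K) -> DR ('X - r%:P).
Proof.
move=> geo; apply: (@key _ (fun n => 'X^n - (r ^+ n)%:P)).
  by move=> n; rewrite dvdp_XsubCl /root !hornerE subrr.
move=> y h hk cv.
have -> : (fun k => Pop T ('X^(h k) - (r ^+ h k)%:P) y) =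
   (fun k => iter (h k) T y + (- r ^+ h k) *: y).
  by apply: funext => k; rewrite PopD -polyCN PopC Pop_Xn.
rewrite -[X in _ --> X]addr0; apply: cvgD_seq => //.
rewrite -(scale0r y); apply: cvgZ_seq; last exact: cvg_cst.
rewrite -oppr0; apply: cvgN; exact: sub_cvg hk geo.
Qed.

Lemma lin_big r : r != 0 -> (fun n => (r^-1) ^+ n) @ \oo --> (0 : K) -> DR ('X - r%:P).
Proof.
move=> r0 geo; apply: (@key _ (fun n => 1 - (r^-1 ^+ n) *: 'X^n)).
  move=> n; rewrite dvdp_XsubCl /root !hornerE -exprMn mulVf // expr1n subrr //.
move=> y h hk cv.
have -> : (fun k => Pop T (1 - (r^-1 ^+ h k) *: 'X^(h k)) y) =
   (fun k => y + (- r^-1 ^+ h k) *: iter (h k) T y).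
  by apply: funext => k; rewrite PopD -scaleNr PopZ Pop_Xn PopC scale1r.
rewrite -[X in _ --> X]addr0; apply: cvgD_seq; first exact: cvg_cst.
rewrite -(scale0r y); apply: cvgZ_seq => //.
rewrite -oppr0; apply: cvgN; exact: sub_cvg hk geo.
Qed.


Lemma cvg_sum_seq n (F : nat -> nat -> X) (l : nat -> X) :
  (forall i, (fun k => F k i) @ \oo --> l i) ->
  (fun k => \sum_(i < n) F k i) @ \oo --> \sum_(i < n) l i.
Proof.
move=> H; elim: n => [|n IH].
  rewrite big_ord0; under eq_fun do rewrite big_ord0; exact: cvg_cst.
rewrite big_ord_recr; under eq_fun do rewrite big_ord_recr /=.
exact: cvgD_seq.
Qed.

Lemma cvg_exprn (s : nat -> K) i : s @ \oo --> (1 : K) ->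
  (fun k => s k ^+ i) @ \oo --> (1 : K).
Proof.
move=> hs; elim: i => [|i IH].
  under eq_fun do rewrite expr0; exact: cvg_cst.
under eq_fun do rewrite exprSr.
by rewrite -(mulr1 1); apply: cvgM.
Qed.

Lemma Pop_comp q (a : K) v :
  Pop T (q \Po (a *: 'X)) v = \sum_(i < size q) (q`_i * a ^+ i) *: iter i T v.
Proof.
rewrite comp_polyE (Pop_sum (size q) (fun i => q`_i *: (a *: 'X)^+i)); apply: eq_bigr => i _.
by rewrite PopZ exprZn PopZ Pop_Xn scalerA.
Qed.

Lemma dense_cyc_generic (c : nat -> K) :
  c @ \oo --> (0 : K) -> (forall k, c k != 0) ->
  (forall q, q != 0 -> exists M, forall k, (M <= k)%N -> DR (q \Po ((1 + c k) *: 'X))) ->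
  cyclic_operator T -> dense [set x | cyclic_vector T x].
Proof.
move=> hc c0 Hgood [x cx].
have hs : (fun k => 1 + c k) @ \oo --> (1 : K).
  rewrite -[X in _ --> X]addr0; apply: cvgD => //; exact: cvg_cst.
apply/(denseP dm dt) => z e e0.
have e2 : 0 < e / 2 by rewrite divr_gt0.
have := cx; rewrite /cyclic_vector orbit_spanE (denseP dm dt) => /(_ z _ e2).
move=> [_ [[q _ <-] dq]].
suff [p [Dp dp]] : exists p, DR p /\ d (Pop T q x) (Pop T p x) < e / 2.
  exists (Pop T p x); split; first exact: (cyclic_Pop dm dt Tc cx Dp).
  have := d_tri dm z (Pop T q x) (Pop T p x); lra.
have [->|q0] := eqVneq q 0.
  have cv : (fun k => Pop T (c k)%:P x) @ \oo --> Pop T 0 x.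
    under eq_fun do rewrite PopC; rewrite Pop0 -(scale0r x).
    apply: cvgZ_seq => //; exact: cvg_cst.
  have [N HN] := proj1 (cvgP dt _ _) cv _ e2.
  by exists (c N)%:P; split; [exact: DR_const|exact: HN].
have [M HM] := Hgood q q0.
have cv : (fun k => Pop T (q \Po ((1 + c k) *: 'X)) x) @ \oo --> Pop T q x.
  under eq_fun do rewrite Pop_comp.
  rewrite /Pop; apply: (@cvg_sum_seq (size q) (fun k i => (q`_i * (1 + c k) ^+ i) *: iter i T x) (fun i => q`_i *: iter i T x)) => i.
  rewrite -[X in _ --> X *: _](mulr1 q`_i); apply: cvgZ_seq; last exact: cvg_cst.
  apply: cvgM; first exact: cvg_cst.
  exact: cvg_exprn.
have [N HN] := proj1 (cvgP dt _ _) cv _ e2.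
exists (q \Po ((1 + c (maxn N M)) *: 'X)); split.
  by apply: HM; rewrite leq_maxr.
by apply: HN; rewrite leq_maxl.
Qed.

End DR.
Local Open Scope complex_scope.

Lemma avoid_list (T : eqType) (u : nat -> T) (L : seq T) : injective u ->
  exists M, forall k, (M <= k)%N -> u k \notin L.
Proof.
move=> ui; elim: L => [|l L [M1 H1]]; first by exists 0%N.
have [[k0 e]|N] := pselect (exists k0, u k0 = l).
  exists (maxn M1 k0.+1) => k; rewrite geq_max => /andP[k1 k2].
  rewrite in_cons negb_or H1 // andbT; apply/eqP => e'.
  by move: k2; rewrite -e in e'; rewrite (ui _ _ e') ltnn.
exists M1 => k k1; rewrite in_cons negb_or H1 // andbT; apply/eqP => e'.
by apply: N; exists k.
Qed.

Section CHelp.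
Variable R : realType.
Local Notation C := (complex R).
Local Notation CN := (complex R : numFieldType).
Local Notation ReC := (@complex.Re R).
Local Notation ImC := (@complex.Im R).

Definition nrm (w : C) : R := Num.sqrt (ReC w ^+ 2 + ImC w ^+ 2).

Lemma normCE (w : C) : `|w| = (nrm w)%:C.
Proof. by rewrite normc_def. Qed.

Lemma nrm_ge0 w : 0 <= nrm w.
Proof. exact: sqrtr_ge0. Qed.

Lemma Re_le w : `|ReC w| <= nrm w.
Proof.
rewrite /nrm -(sqrtr_sqr (ReC w)) ler_sqrt ?addr_ge0 ?sqr_ge0 //.
by rewrite lerDl sqr_ge0.
Qed.

Lemma Im_le w : `|ImC w| <= nrm w.
Proof.
rewrite /nrm -(sqrtr_sqr (ImC w)) ler_sqrt ?addr_ge0 ?sqr_ge0 //.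
by rewrite lerDr sqr_ge0.
Qed.

Lemma nrmX w n : nrm (w ^+ n) = nrm w ^+ n.
Proof.
apply: (@complexI R); rewrite -normCE rmorphXn /= -normCE normrX //.
Qed.

Lemma nrmV w : nrm (w^-1) = (nrm w)^-1.
Proof.
apply: (@complexI R); rewrite -normCE fmorphV /= -normCE normfV //.
Qed.

Lemma nrm_real (r : R) : nrm r%:C = `|r|.
Proof. by rewrite /nrm /= expr0n addr0 sqrtr_sqr. Qed.

Lemma cvgC (u : nat -> R) : u @ \oo --> (0 : R) ->
  (fun n => (u n)%:C : CN) @ \oo --> (0 : CN).
Proof.
move=> cu; apply/cvgr0Pnorm_lt => eps eps0.
have : 0 < ReC eps by move: eps0; rewrite ltcE => /andP[].
move=> /(@cvgr0_norm_lt _ _ _ _ _ u cu) h; apply: (filterS _ h) => n hn.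
rewrite normCE nrm_real ltcE /=; move: eps0; rewrite ltcE => /andP[/eqP -> _].
by rewrite eqxx hn.
Qed.


Lemma normCX_real (z : C) n : `|z ^+ n| = `|(nrm z ^+ n)%:C|.
Proof.
rewrite normrX !normCE nrm_real ger0_norm ?exprn_ge0 ?nrm_ge0 //.
by rewrite rmorphXn.
Qed.

Lemma lt1C (r : R) : ((r%:C : C) < 1) = (r < 1).
Proof. by rewrite ltcE /= eqxx. Qed.

Lemma gt1C (r : R) : ((1 : C) < r%:C) = (1 < r).
Proof. by rewrite ltcE /= eqxx. Qed.

Lemma geoC (z : C) : `|z| < 1 -> (fun n => z ^+ n : CN) @ \oo --> (0 : CN).
Proof.
move=> z1; have r1 : `|nrm z| < 1.
  by rewrite ger0_norm ?nrm_ge0 // -lt1C -normCE.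
have cu := cvgC (cvg_expr r1).
apply/cvgr0Pnorm_lt => eps eps0.
have := proj1 (cvgr0Pnorm_lt _) cu eps eps0.
move=> [N _ HN]; exists N => // n /= Nn; rewrite normCX_real; exact: HN.
Qed.


Definition uC (k : nat) : C := (1 + k.+1%:R^-1)%:C.

Lemma uC_inj : injective uC.
Proof.
move=> a b /complexI /addrI /invr_inj /eqP; rewrite eqr_nat eqSS => /eqP //.
Qed.

Lemma uC_ge0 k : 0 <= uC k.
Proof. by rewrite /uC ler0c addr_ge0 // invr_ge0 ler0n. Qed.

Lemma avoid (p : {poly C}) : p != 0 -> exists M, forall k, (M <= k)%N ->
  forall z, root (p \Po (uC k *: 'X)) z -> `|z| != 1.
Proof.
move=> p0; have [rs Hrs] := closed_field_poly_normal p.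
have lc0 : lead_coef p != 0 by rewrite lead_coef_eq0.
have [M HM] := avoid_list (map (fun w : C => `|w|) rs) uC_inj.
exists M => k kM z; rewrite /root horner_comp hornerZ hornerX.
move=> /eqP hp; apply/eqP => z1.
have : root p (uC k * z) by rewrite /root hp.
rewrite {1}Hrs rootZ // root_prod_XsubC => hin.
have := HM k kM; rewrite (_ : uC k = `|uC k * z|).
  by rewrite map_f.
by rewrite normrM z1 mulr1 ger0_norm // uC_ge0.
Qed.

End CHelp.

Lemma comp_nonzero (F : fieldType) (q : {poly F}) (a : F) : a != 0 -> q != 0 ->
  q \Po (a *: 'X) != 0.
Proof.
move=> a0 q0; apply: contra q0 => /eqP h.
have : (q \Po (a *: 'X)) \Po (a^-1 *: 'X) = q.
  by rewrite -comp_polyA comp_polyZ comp_polyX scalerA divff // scale1r comp_polyXr.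
by rewrite h comp_poly0 => <-.
Qed.

Section Cplx.
Variables (R : realType) (X : topologicalLmodType (complex R)).
Variables (T : {linear X -> X}) (d : X -> X -> R).
Hypotheses (dm : is_metric d) (dt : metric_induces_topology d).
Hypothesis Tc : continuous T.
Hypothesis rec : recurrent T.
Local Notation C := (complex R).

Lemma lin_cplx (r : C) : `|r| != 1 -> DR T ('X - r%:P).
Proof.
rewrite normCE => r1.
have n1 : nrm r != 1 by apply: contra r1 => /eqP ->.
case: (ltgtP (nrm r) 1) => [lt1|gt1|e1]; last by rewrite e1 eqxx in n1.
  apply: (lin_small dm dt rec); apply: geoC; by rewrite normCE lt1C.
have r0 : r != 0.
  apply/eqP => r0; move: gt1; rewrite r0 (_ : nrm 0 = 0) ?ltr10 //.
  by rewrite /nrm /= expr0n addr0 sqrtr0.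
apply: (lin_big dm dt rec r0); apply: geoC.
rewrite normCE nrmV lt1C invf_lt1 //; exact: lt_trans ltr01 gt1.
Qed.

Lemma DR_cplx (p : {poly C}) : p != 0 -> (forall z, root p z -> `|z| != 1) -> DR T p.
Proof.
move=> p0 Hr; have [rs Hrs] := closed_field_poly_normal p.
have lc0 : lead_coef p != 0 by rewrite lead_coef_eq0.
have Hin : forall z, z \in rs -> `|z| != 1.
  by move=> z zin; apply: Hr; rewrite Hrs rootZ // root_prod_XsubC.
rewrite Hrs; apply: (DR_scale dm dt lc0).
elim: rs Hin {Hrs} => [|z rs IH] Hin.
  by rewrite big_nil; apply: (DR_const T dm dt); exact: oner_neq0.
rewrite big_cons; apply: (DR_mul dm dt Tc).
  by apply: lin_cplx; apply: Hin; rewrite mem_head.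
by apply: IH => w win; apply: Hin; rewrite in_cons win orbT.
Qed.

Lemma dense_cplx : cyclic_operator T -> dense [set x | cyclic_vector T x].
Proof.
pose c k : C := (k.+1%:R^-1)%:C.
have hc : c @ \oo --> (0 : (C : numFieldType)).
  exact: (cvgC (@cvg_harmonic R)).
have c0 k : c k != 0.
  by rewrite /c (_ : 0 = 0%:C) // (inj_eq (@complexI R)) invr_eq0 pnatr_eq0.
apply: (dense_cyc_generic dm dt Tc hc c0) => q q0.
have [M HM] := avoid q0; exists M => k kM.
have -> : 1 + c k = uC R k by rewrite /uC /c rmorphD rmorph1.
apply: DR_cplx; first by apply: comp_nonzero => //; rewrite /uC (_ : 0 = 0%:C) // (inj_eq (@complexI R)) gt_eqF // ltr_pwDl // invr_ge0 ler0n.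
exact: HM.
Qed.

End Cplx.
Section RAlg.
Variable R : realType.
Local Notation C := (complex R).
Local Notation ReC := (@complex.Re R).
Local Notation ImC := (@complex.Im R).
Local Notation pC := (map_poly (real_complex R)).

Definition Qp (mu : C) : {poly R} :=
  'X^2 - (2 * ReC mu) *: 'X + (ReC mu ^+ 2 + ImC mu ^+ 2)%:P.

Lemma XsubC_mul (m n : C) :
  ('X - m%:P) * ('X - n%:P) = 'X^2 - (m + n) *: 'X + (m * n)%:P.
Proof. rewrite -mul_polyC polyCD polyCM; ring. Qed.

Lemma pCQ (mu : C) : pC (Qp mu) = ('X - mu%:P) * ('X - (mu^*)%:P).
Proof.
rewrite XsubC_mul /Qp rmorphD rmorphB /= map_polyXn map_polyZ map_polyX map_polyC /=.
case: mu => a b /=; congr (_ - _ *: _ + _%:P).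
  by apply/eqP; rewrite eq_complex /=; apply/andP; split; apply/eqP; ring.
by apply/eqP; rewrite eq_complex /=; apply/andP; split; apply/eqP; ring.
Qed.


Lemma map_conj_pC (p : {poly R}) : map_poly conjc (pC p) = pC p.
Proof.
rewrite -map_poly_comp; apply: eq_map_poly => x /=; exact: conjc_real.
Qed.

Lemma root_conj (p : {poly R}) (mu : C) : root (pC p) mu -> root (pC p) (mu^*).
Proof. by rewrite -[in X in X -> _](conjcK mu) -complex_root_conj map_conj_pC. Qed.

Lemma conj_neq (mu : C) : ImC mu != 0 -> mu^* != mu.
Proof.
case: mu => a b /= b0; rewrite eq_complex /= eqxx /=.
apply: contra b0 => /eqP h; apply/eqP; lra.
Qed.

Lemma quad_dvd (P : {poly R}) (mu : C) : ImC mu != 0 -> root (pC P) mu -> Qp mu %| P.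
Proof.
move=> i0 r; rewrite -(dvdp_map (real_complex R)) pCQ.
have r' := root_conj r.
move: r; rewrite -dvdp_XsubCl => /dvdpP [g hg].
have : root g (mu^*).
  move: r'; rewrite hg /root hornerM mulf_eq0 !hornerE subr_eq0 (negbTE (conj_neq i0)) orbF //.
rewrite -dvdp_XsubCl => /dvdpP [h hh].
by rewrite hg hh -mulrA mulrC dvdp_mulIr.
Qed.

Definition al (mu w : C) : R := ImC w / ImC mu.
Definition be (mu w : C) : R := ReC w - al mu w * ReC mu.

Lemma albe (mu w : C) : ImC mu != 0 -> (al mu w)%:C * mu + (be mu w)%:C = w.
Proof.
rewrite /be /al; case: mu w => a b [u v] /= b0.
apply/eqP; rewrite eq_complex /=; apply/andP; split; apply/eqP; field => //.
Qed.

Lemma al_le (mu w : C) : ImC mu != 0 -> `|al mu w| <= nrm w * `|ImC mu|^-1.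
Proof.
move=> b0; rewrite /al normrM normfV ler_wpM2r ?invr_ge0 //; exact: Im_le.
Qed.

Lemma be_le (mu w : C) : ImC mu != 0 ->
  `|be mu w| <= nrm w * (1 + `|ImC mu|^-1 * `|ReC mu|).
Proof.
move=> b0; rewrite /be; apply: (le_trans (ler_normB _ _)).
rewrite normrM mulrDr mulr1 mulrA; apply: lerD; first exact: Re_le.
by apply: ler_wpM2r => //; exact: al_le.
Qed.

Lemma small_bound (u : nat -> R) (rho K0 : R) : 0 <= rho -> rho < 1 -> 0 <= K0 ->
  (forall n, `|u n| <= K0 * rho ^+ n) -> u @ \oo --> (0 : R).
Proof.
move=> r0 r1 K00 hb; apply/cvgr0Pnorm_lt => eps eps0.
have e1 : 0 < eps / (K0 + 1) by rewrite divr_gt0 // ltr_wpDl.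
have r1' : `|rho| < 1 by rewrite ger0_norm.
have [N _ HN] := @cvgr0_norm_lt _ _ _ _ _ _ (cvg_expr r1') _ e1.
exists N => // n /= Nn; have := HN n Nn; rewrite /= ger0_norm ?exprn_ge0 // => h.
have h2 := hb n; have hp : 0 <= rho ^+ n by rewrite exprn_ge0.
move: h; rewrite ltr_pdivlMr ?ltr_wpDl // => h.
move: (rho ^+ n) hp h h2 => t hp h h2; nra.
Qed.

End RAlg.

Section Real.
Variables (R : realType) (X : topologicalLmodType R).
Variables (T : {linear X -> X}) (d : X -> X -> R).
Hypotheses (dm : is_metric d) (dt : metric_induces_topology d).
Hypothesis Tc : continuous T.
Hypothesis rec : recurrent T.
Local Notation C := (complex R).
Local Notation ReC := (@complex.Re R).
Local Notation ImC := (@complex.Im R).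
Local Notation pC := (map_poly (real_complex R)).

Lemma PopB (p q : {poly R}) v : Pop T (p - q) v = Pop T p v - Pop T q v.
Proof. by rewrite PopD -(scaleN1r q) PopZ scaleN1r. Qed.

Lemma seq_small (mu nu : C) : ImC mu != 0 -> nrm nu < 1 ->
  (fun n => al mu (nu ^+ n)) @ \oo --> (0 : R) /\
  (fun n => be mu (nu ^+ n)) @ \oo --> (0 : R).
Proof.
move=> i0 n1; split.
  apply: (@small_bound _ _ (nrm nu) (`|ImC mu|^-1)).
  - exact: nrm_ge0.
  - exact: n1.
  - by rewrite invr_ge0.
  - by move=> n; rewrite mulrC -nrmX; exact: al_le.
apply: (@small_bound _ _ (nrm nu) (1 + `|ImC mu|^-1 * `|ReC mu|)).
- exact: nrm_ge0.
- exact: n1.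
- by rewrite addr_ge0 // mulr_ge0 // invr_ge0.
- by move=> n; rewrite mulrC -nrmX; exact: be_le.
Qed.

Lemma cvg_comb (a b : nat -> R) (u v : nat -> X) (lu lv : X) :
  a @ \oo --> (0 : R) -> b @ \oo --> (0 : R) -> u @ \oo --> lu -> v @ \oo --> lv ->
  (fun k => a k *: u k + b k *: v k) @ \oo --> (0 : X).
Proof.
move=> ca cb cu cv; rewrite -(addr0 0) -{1}(scale0r lu) -(scale0r lv).
by apply: cvgD_seq; apply: cvgZ_seq.
Qed.

Lemma quad_DR (mu : C) : ImC mu != 0 -> nrm mu != 1 -> DR T (Qp mu).
Proof.
move=> i0 n1.
case: (ltgtP (nrm mu) 1) => [lt1|gt1|e1]; last by rewrite e1 eqxx in n1.
  have [ca cb] := seq_small i0 lt1.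
  apply: (key dm dt rec (P := fun n => 'X^n - ((al mu (mu ^+ n)) *: 'X + (be mu (mu ^+ n))%:P))).
    move=> n; apply: quad_dvd => //.
    rewrite /root rmorphB rmorphD /= map_polyXn map_polyZ map_polyX map_polyC /= !hornerE.
    by rewrite albe // subrr.
  move=> y h hk cv.
  have -> : (fun k => Pop T ('X^(h k) - ((al mu (mu ^+ h k)) *: 'X + (be mu (mu ^+ h k))%:P)) y) =
     (fun k => iter (h k) T y + ((- al mu (mu ^+ h k)) *: T y + (- be mu (mu ^+ h k)) *: y)).
    apply: funext => k; rewrite PopB PopD PopZ PopX PopC Pop_Xn.
    by rewrite opprD !scaleNr.
  rewrite -[X in _ --> X]addr0; apply: cvgD_seq => //.
  apply: (cvg_comb (lu := T y) (lv := y)); try exact: cvg_cst.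
    by rewrite -oppr0; apply: cvgN; exact: sub_cvg hk ca.
  by rewrite -oppr0; apply: cvgN; exact: sub_cvg hk cb.
have mu0 : mu != 0 by apply: contraTneq i0 => ->; rewrite eqxx.
have nlt : nrm (mu^-1) < 1 by rewrite nrmV invf_lt1 //; exact: lt_trans ltr01 gt1.
have [ca cb] := seq_small i0 nlt.
apply: (key dm dt rec (P := fun n => 1 - 'X^n * ((al mu (mu^-1 ^+ n)) *: 'X + (be mu (mu^-1 ^+ n))%:P))).
  move=> n; apply: quad_dvd => //.
  rewrite /root rmorphB rmorphM rmorphD /= map_polyXn map_polyZ map_polyX map_polyC /= rmorph1 !hornerE.
  by rewrite map_polyC hornerC albe // -exprMn mulfV // expr1n subrr.
move=> y h hk cv.
have -> : (fun k => Pop T (1 - 'X^(h k) * ((al mu (mu^-1 ^+ h k)) *: 'X + (be mu (mu^-1 ^+ h k))%:P)) y) =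
   (fun k => y + ((- al mu (mu^-1 ^+ h k)) *: T (iter (h k) T y) + (- be mu (mu^-1 ^+ h k)) *: iter (h k) T y)).
  apply: funext => k; rewrite PopB PopC scale1r mulrC PopM Pop_Xn PopD PopZ PopX PopC.
  by rewrite opprD !scaleNr.
rewrite -[X in _ --> X]addr0; apply: cvgD_seq; first exact: cvg_cst.
apply: (cvg_comb (lu := T y) (lv := y)) => //.
- by rewrite -oppr0; apply: cvgN; exact: sub_cvg hk ca.
- by rewrite -oppr0; apply: cvgN; exact: sub_cvg hk cb.
- exact: (continuous_cvg _ (@Tc y) cv).
Qed.


Lemma lin_real (r : R) : `|r| != 1 -> DR T ('X - r%:P).
Proof.
move=> r1.
case: (ltgtP `|r| 1) => [lt1|gt1|e1]; last by rewrite e1 eqxx in r1.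
  by apply: (lin_small dm dt rec); exact: cvg_expr.
have r0 : r != 0 by apply: contraTneq gt1 => ->; rewrite normr0 ltr10.
apply: (lin_big dm dt rec r0); apply: cvg_expr.
by rewrite normfV invf_lt1 //; exact: lt_trans ltr01 gt1.
Qed.

Lemma size_Qp (mu : C) : size (Qp mu) = 3%N.
Proof.
by rewrite -(size_map_poly (real_complex R)) pCQ size_mul ?polyXsubC_eq0 // !size_XsubC.
Qed.

Lemma DR_real n (p : {poly R}) : (size p <= n)%N -> p != 0 ->
  (forall z, root (pC p) z -> `|z| != 1) -> DR T p.
Proof.
elim: n p => [|n IH] p sz p0 Hr.
  by move: p0; rewrite -size_poly_eq0 -leqn0 sz.
have [s1|s1] := eqVneq (size p) 1%N.
  have /size_poly1P [c c0 ->] : size p == 1%N by rewrite s1.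
  exact: (DR_const T dm dt c0).
have : size (pC p) != 1%N by rewrite size_map_poly.
move=> /closed_rootP [mu rmu].
have nmu : nrm mu != 1.
  have := Hr mu rmu; rewrite normCE; apply: contra => /eqP ->; by [].
have Hsub : forall p1 q1, p = p1 * q1 -> forall z, root (pC p1) z -> `|z| != 1.
  move=> p1 q1 hp z rz; apply: Hr; rewrite hp rmorphM /= rootM rz //.
have [i0|i0] := eqVneq (ImC mu) 0.
  move: rmu nmu; case: mu i0 => r b /= -> rmu nmu.
  have rr : root p r.
    by move: rmu; rewrite /root complexr0 (horner_map (real_complex R)) (_ : 0 = 0%:C) // (inj_eq (@complexI R)).
  have dv : ('X - r%:P) %| p by rewrite dvdp_XsubCl.
  have hp := esym (divpK dv); set p1 := p %/ ('X - r%:P) in hp.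
  have p10 : p1 != 0 by apply: contraNneq p0 => e; rewrite hp e mul0r.
  rewrite hp; apply: (DR_mul dm dt Tc).
    apply: (IH p1) => //; last exact: Hsub hp.
    move: sz; rewrite hp size_mul ?polyXsubC_eq0 // size_XsubC addn2 /=.
    by rewrite ltnS.
  by apply: lin_real; move: nmu; rewrite complexr0 nrm_real.
have dv := quad_dvd i0 rmu.
have hp := esym (divpK dv); set p1 := p %/ Qp mu in hp.
have p10 : p1 != 0 by apply: contraNneq p0 => e; rewrite hp e mul0r.
have Q0 : Qp mu != 0 by rewrite -size_poly_eq0 size_Qp.
rewrite hp; apply: (DR_mul dm dt Tc); last exact: quad_DR.
apply: (IH p1) => //; last exact: Hsub hp.
move: sz; rewrite hp size_mul // size_Qp addn3 /=.
by rewrite ltnS => /ltnW.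
Qed.

Lemma dense_real : cyclic_operator T -> dense [set x | cyclic_vector T x].
Proof.
pose c k : R := k.+1%:R^-1.
have hc : c @ \oo --> (0 : R) by exact: (@cvg_harmonic R).
have c0 k : c k != 0 by rewrite /c invr_eq0 pnatr_eq0.
apply: (dense_cyc_generic dm dt Tc hc c0) => q q0.
have pq0 : pC q != 0 by rewrite map_poly_eq0.
have [M HM] := avoid pq0; exists M => k kM.
apply: (DR_real (leqnn _)).
  by apply: comp_nonzero => //; rewrite gt_eqF // ltr_pwDl // invr_ge0 ler0n.
move=> z; rewrite map_comp_poly map_polyZ map_polyX /=.
exact: HM.
Qed.

End Real.

Theorem mainTheorem7 (R : realType) : thm7_for R R /\ thm7_for R (complex R).
Proof.
split => X T [d [dm dt dc]] sep _ Tc rec cyc.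
  apply: (generic_main dm dt Tc dc sep rec); exact: (dense_real dm dt Tc rec cyc).
apply: (generic_main dm dt Tc dc sep rec); exact: (dense_cplx dm dt Tc rec cyc).
Qed.
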